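(* Let $s,t,r>1$ be integers and let $G=C_s * C_t$ be the free product of cyclic groups of orders $s$ and $t$. For every $w\in G$, the normal closure of $w^r$ in $G$ is a proper subgroup of $G$. *)

(* Defs.v *)
From Stdlib Require Import Arith.

Record group := Group {
  gcar :> Type;
  gmul : gcar -> gcar -> gcar;
  gone : gcar;
  ginv : gcar -> gcar;
  gmulA : forall x y z, gmul x (gmul y z) = gmul (gmul x y) z;
  gmul1g : forall x, gmul gone x = x;
  gmulVg : forall x, gmul (ginv x) x = gone
}.

Arguments gmul {g}.
Arguments gone {g}.
Arguments ginv {g}.

Fixpoint gpow {G : group} (x : G) (n : nat) : G :=
  match n with
  | O => gone
  | S k => gmul x (gpow x k)
  end.

Definition is_hom (G H : group) (f : G -> H) : Prop :=
  forall x y : G, f (gmul x y) = gmul (f x) (f y).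

Definition is_normal_subgroup (G : group) (N : G -> Prop) : Prop :=
  N gone /\
  (forall x y, N x -> N y -> N (gmul x y)) /\
  (forall x, N x -> N (ginv x)) /\
  (forall g x, N x -> N (gmul (ginv g) (gmul x g))).

Definition normal_closure (G : group) (x : G) : G -> Prop :=
  fun z => forall N : G -> Prop, is_normal_subgroup G N -> N x -> N z.

(* (G, a, b) is the free product C_s * C_t, i.e. G = < a, b | a^s, b^t >,
   characterised by its universal property: a^s = 1, b^t = 1, and for every
   group H and x, y in H with x^s = 1, y^t = 1 there is a unique
   homomorphism G -> H sending a to x and b to y. *)
Definition is_free_product_cyclic (s t : nat) (G : group) (a b : G) : Prop :=
  gpow a s = gone /\ gpow b t = gone /\
  forall (H : group) (x y : H), gpow x s = gone -> gpow y t = gone ->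
    (exists f : G -> H, is_hom G H f /\ f a = x /\ f b = y) /\
    (forall f g : G -> H, is_hom G H f -> is_hom G H g ->
       f a = x -> f b = y -> g a = x -> g b = y -> forall z, f z = g z).

(* Main.v *)
From HB Require Import structures.
From mathcomp Require Import all_boot all_order all_algebra.
From mathcomp Require Import algC cyclotomic.
From Stdlib Require Import Ring ProofIrrelevance.
Require Import Defs.
Set Implicit Arguments. Unset Strict Implicit. Unset Printing Implicit Defensive.
Arguments gmulA {g}. Arguments gmul1g {g}. Arguments gmulVg {g}.
Lemma gmulgV (H : group) (x : H) : gmul x (ginv x) = gone.
Proof.
rewrite -[gmul x (ginv x)]gmul1g -{1}(gmulVg (ginv x)).
by rewrite -gmulA [gmul (ginv x) (gmul x _)]gmulA gmulVg gmul1g gmulVg.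
Qed.

Lemma gmulg1 (H : group) (x : H) : gmul x gone = x.
Proof. by rewrite -(gmulVg x) gmulA gmulgV gmul1g. Qed.

Lemma ginv_uniq (H : group) (x y : H) : gmul x y = gone -> y = ginv x.
Proof.
move=> e; rewrite -[y]gmul1g -(gmulVg x) -gmulA e gmulg1 //.
Qed.

Lemma ginvK (H : group) (x : H) : ginv (ginv x) = x.
Proof. symmetry; apply: ginv_uniq; exact: gmulVg. Qed.

Lemma ginvM (H : group) (x y : H) : ginv (gmul x y) = gmul (ginv y) (ginv x).
Proof.
symmetry; apply: ginv_uniq.
by rewrite -gmulA [gmul y _]gmulA gmulgV gmul1g gmulgV.
Qed.

Lemma ginv1 (H : group) : ginv (@gone H) = gone.
Proof. symmetry; apply: ginv_uniq; exact: gmul1g. Qed.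

Lemma gpowD (H : group) (x : H) m n : gpow x (m + n) = gmul (gpow x m) (gpow x n).
Proof. elim: m => [|m IH] /=; first by rewrite gmul1g. by rewrite IH gmulA. Qed.

Lemma gpowM (H : group) (x : H) m n : gpow x (m * n) = gpow (gpow x m) n.
Proof.
elim: n => [|n IH]; first by rewrite muln0.
by rewrite mulnS gpowD IH.
Qed.

Lemma gpow1 (H : group) n : gpow (@gone H) n = gone.
Proof. by elim: n => //= n ->; rewrite gmul1g. Qed.

Lemma gpow_mod (H : group) (x : H) m n : gpow x m = gone -> gpow x n = gpow x (n %% m).
Proof.
move=> e; rewrite {1}(divn_eq n m) gpowD mulnC gpowM e gpow1 gmul1g //.
Qed.

Lemma gpow_conj (H : group) (g u : H) n :
  gpow (gmul g (gmul u (ginv g))) n = gmul g (gmul (gpow u n) (ginv g)).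
Proof.
elim: n => [|n IH] /=; first by rewrite gmul1g gmulgV.
rewrite IH !gmulA -[gmul (gmul (gmul g u) (ginv g)) g]gmulA gmulVg gmulg1.
by rewrite -!gmulA.
Qed.

Lemma hom1 (G H : group) (f : G -> H) : is_hom G H f -> f gone = gone.
Proof.
move=> hf; have e : gmul (f gone) (f gone) = f gone by rewrite -hf gmul1g.
by rewrite -[f gone]gmul1g -(gmulVg (f gone)) -gmulA e.
Qed.

Lemma homV (G H : group) (f : G -> H) : is_hom G H f -> forall x, f (ginv x) = ginv (f x).
Proof.
move=> hf x; apply: ginv_uniq; by rewrite -hf gmulgV hom1.
Qed.

Lemma homX (G H : group) (f : G -> H) : is_hom G H f -> forall x n, f (gpow x n) = gpow (f x) n.
Proof. move=> hf x; elim=> [|n IH] /=; first exact: hom1. by rewrite hf IH. Qed.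
Definition subgrp (G : group) (P : G -> Prop) (P1 : P gone)
  (PM : forall x y, P x -> P y -> P (gmul x y)) (PV : forall x, P x -> P (ginv x)) : group.
refine (@Group {x | P x}
  (fun x y => exist _ (gmul (proj1_sig x) (proj1_sig y)) (PM _ _ (proj2_sig x) (proj2_sig y)))
  (exist _ gone P1)
  (fun x => exist _ (ginv (proj1_sig x)) (PV _ (proj2_sig x))) _ _ _).
- move=> x y z; apply: eq_sig_hprop => [? ? ?|]; [exact: proof_irrelevance|exact: gmulA].
- move=> x; apply: eq_sig_hprop => [? ? ?|]; [exact: proof_irrelevance|exact: gmul1g].
- move=> x; apply: eq_sig_hprop => [? ? ?|]; [exact: proof_irrelevance|exact: gmulVg].
Defined.

Lemma subgrp_pow G P P1 PM PV (x : @subgrp G P P1 PM PV) n :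
  proj1_sig (gpow x n) = gpow (proj1_sig x) n.
Proof. by elim: n => //= n ->. Qed.

Lemma gen_all (s t : nat) (G : group) (a b : G) (hG : is_free_product_cyclic s t G a b)
  (P : G -> Prop) (P1 : P gone) (Pa : P a) (Pb : P b)
  (PM : forall x y, P x -> P y -> P (gmul x y)) (PV : forall x, P x -> P (ginv x)) :
  forall z, P z.
Proof.
case: hG => [hs [ht U]].
pose S := @subgrp G P P1 PM PV.
pose a' : S := exist _ a Pa. pose b' : S := exist _ b Pb.
have ha : gpow a' s = gone by apply: eq_sig_hprop => [? ? ?|]; [exact: proof_irrelevance| rewrite subgrp_pow].
have hb : gpow b' t = gone by apply: eq_sig_hprop => [? ? ?|]; [exact: proof_irrelevance| rewrite subgrp_pow].
have [[f [hf [fa fb]]] _] := U S a' b' ha hb.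
have [_ U2] := U G a b hs ht.
have e : forall z, proj1_sig (f z) = z.
  apply: (U2 (fun z => proj1_sig (f z)) id) => //.
  - by move=> x y /=; rewrite hf.
  - by rewrite fa.
  - by rewrite fb.
move=> z; rewrite -(e z); exact: proj2_sig.
Qed.
Definition gen (G : group) (a b : G) (c : bool) : G := if c then a else b.
Definition bnd (s t : nat) (c : bool) : nat := if c then s else t.

Fixpoint evalw (G : group) (a b : G) (l : seq (bool * nat)) : G :=
  match l with
  | [::] => gone
  | (c, n) :: l' => gmul (gpow (gen a b c) n) (evalw a b l')
  end.

Lemma evalw_cat (G : group) (a b : G) l1 l2 :
  evalw a b (l1 ++ l2) = gmul (evalw a b l1) (evalw a b l2).
Proof.
elim: l1 => [|[c n] l1 IH] /=; first by rewrite gmul1g.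
by rewrite IH gmulA.
Qed.

Lemma ginv_pow (H : group) (x : H) m n : 0 < m -> gpow x m = gone ->
  ginv (gpow x n) = gpow x (n * m.-1).
Proof.
move=> m0 e; symmetry; apply: ginv_uniq.
rewrite -gpowD -{1}[n]muln1 -mulnDr add1n prednK // mulnC gpowM e gpow1 //.
Qed.

Lemma gen_pow (s t : nat) (G : group) (a b : G) (hG : is_free_product_cyclic s t G a b) c :
  gpow (gen a b c) (bnd s t c) = gone.
Proof. by case: hG => [hs [ht _]]; case: c. Qed.

Lemma all_words (s t : nat) (hs : 1 < s) (ht : 1 < t) (G : group) (a b : G)
  (hG : is_free_product_cyclic s t G a b) (z : G) :
  exists l, z = evalw a b l.
Proof.
apply: (gen_all hG (P := fun z => exists l, z = evalw a b l)).
- by exists [::].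
- by exists [:: (true, 1)]; rewrite /= !gmulg1.
- by exists [:: (false, 1)]; rewrite /= !gmulg1.
- by move=> x y [l1 ->] [l2 ->]; exists (l1 ++ l2); rewrite evalw_cat.
- move=> x [l ->]; elim: l => [|[c n] l [l' IH]] /=; first by exists [::]; rewrite ginv1.
  exists (l' ++ [:: (c, n * (bnd s t c).-1)]).
  rewrite ginvM IH evalw_cat /= gmulg1 (ginv_pow (m := bnd s t c)) //.
    by case: c; [apply: ltnW | apply: ltnW].
  exact: (gen_pow hG).
Qed.
Fixpoint okw (s t : nat) (l : seq (bool * nat)) : bool :=
  match l with
  | [::] => true
  | (c, n) :: l' => [&& 0 < n, n < bnd s t c, okw s t l' &
                       (if l' is (c', _) :: _ then c != c' else true)]
  end.

Lemma bnd_gt0 s t c : 1 < s -> 1 < t -> 0 < bnd s t c.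
Proof. by move=> hs ht; case: c; [apply: ltnW | apply: ltnW]. Qed.

Lemma norm_words (s t : nat) (hs : 1 < s) (ht : 1 < t) (G : group) (a b : G)
  (hG : is_free_product_cyclic s t G a b) l :
  exists l', okw s t l' /\ evalw a b l = evalw a b l'.
Proof.
elim: l => [|[c n] l0 [l0' [ok0 e0]]]; first by exists [::].
have hb := bnd_gt0 c hs ht.
have hp := gen_pow hG c.
rewrite /= e0 (gpow_mod n hp).
set m := n %% bnd s t c.
have mlt : m < bnd s t c by rewrite ltn_pmod.
case: (posnP m) => [m0 | mpos].
  by exists l0'; rewrite m0 /= gmul1g.
case: l0' ok0 e0 => [|[c' n'] l1] ok0 e0.
  by exists [:: (c, m)]; rewrite /= mpos mlt.
case: (eqVneq c' c) => [ec | nc].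
  subst c'.
  move: ok0 => /= /and4P [n'0 n'lt ok1 hd1].
  rewrite gmulA -gpowD (gpow_mod (m + n') hp).
  set k := (m + n') %% bnd s t c.
  have klt : k < bnd s t c by rewrite ltn_pmod.
  case: (posnP k) => [k0 | kpos].
    by exists l1; rewrite k0 /= gmul1g.
  by exists ((c, k) :: l1); rewrite /= kpos klt ok1 hd1.
exists ((c, m) :: (c', n') :: l1); split => //.
move: ok0 => /= ok0; by rewrite mpos mlt ok0 eq_sym nc.
Qed.
Lemma okw_cons s t x l : okw s t (x :: l) -> okw s t l.
Proof. by case: x => c n /= /and4P []. Qed.

Lemma okw_rcons s t m y : okw s t (rcons m y) =
  [&& 0 < y.2, y.2 < bnd s t y.1, okw s t m &
      (if m is [::] then true else (last (true, 0) m).1 != y.1)].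
Proof.
case: y => c n /=.
elim: m => [|[c1 n1] m IH] /=; first by rewrite !andbT.
rewrite IH.
case: m IH => [|[c2 n2] m] IH /=.
  by rewrite !andbT; case: (0 < n1); case: (n1 < bnd s t c1); case: (0 < n); case: (n < bnd s t c).
set X := [&& 0 < n2, _, _ & _]; clearbody X.
by case: (0 < n1); case: (n1 < bnd s t c1); case: (0 < n); case: (n < bnd s t c); case: X; case: (c1 != c2); case: ((last (c2, n2) m).1 != c).
Qed.
Lemma evalw_rcons (G : group) (a b : G) m y :
  evalw a b (rcons m y) = gmul (evalw a b m) (gpow (gen a b y.1) y.2).
Proof. by case: y => c n; rewrite -cats1 evalw_cat /= gmulg1. Qed.

Lemma conj_assoc (H : group) (g g' u : H) :
  gmul g (gmul (gmul g' (gmul u (ginv g'))) (ginv g)) =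
  gmul (gmul g g') (gmul u (ginv (gmul g g'))).
Proof. by rewrite ginvM !gmulA. Qed.

Definition cycok (l : seq (bool * nat)) :=
  (size l <= 1) || ((head (true, 0) l).1 != (last (true, 0) l).1).

Lemma cyc_red (s t : nat) (hs : 1 < s) (ht : 1 < t) (G : group) (a b : G)
  (hG : is_free_product_cyclic s t G a b) :
  forall N l, size l <= N -> okw s t l ->
  exists g l', evalw a b l = gmul g (gmul (evalw a b l') (ginv g)) /\ okw s t l' /\ cycok l'.
Proof.
have triv : forall l, okw s t l -> cycok l ->
    exists g l', evalw a b l = gmul g (gmul (evalw a b l') (ginv g)) /\ okw s t l' /\ cycok l'.
  by move=> l ok cy; exists gone, l; rewrite ginv1 gmulg1 gmul1g.
elim=> [|N IH] l.
  by case: l => // _ ok; apply: triv.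
move=> hsz ok.
case: l hsz ok => [|[c n] l1] hsz ok; first by apply: triv.
case/lastP: l1 hsz ok => [|m [c2 n2]] hsz ok; first by apply: triv.
case: (eqVneq c c2) => [ec|nc]; last first.
  by apply: triv => //; rewrite /cycok /= last_rcons nc orbT.
subst c2.
have okr := okw_cons ok.
move: (okr); rewrite okw_rcons /= => /and4P [_ _ okm hlast].
have hp := gen_pow hG c.
set x := gen a b c in hp *.
have hb := bnd_gt0 c hs ht.
set k := (n2 + n) %% bnd s t c.
have klt : k < bnd s t c by rewrite ltn_pmod.
have key : gmul (gpow x n) (evalw a b (rcons m (c, n2))) =
    gmul (gpow x n) (gmul (gmul (evalw a b m) (gpow x k)) (ginv (gpow x n))).
  rewrite evalw_rcons /= -/x /k -(gpow_mod _ hp) gpowD.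
  by rewrite -!gmulA gmulgV gmulg1.
have szm : (size m).+1 <= N by move: hsz; rewrite /= size_rcons.
case: (posnP k) => [k0 | kpos].
  have [g' [l' [e' [ok' cy']]]] := IH m (ltnW szm) okm.
  exists (gmul (gpow x n) g'), l'; split => //.
  by rewrite key k0 /= gmulg1 e' conj_assoc.
have okm' : okw s t (rcons m (c, k)) by rewrite okw_rcons /= kpos klt okm.
have sz' : size (rcons m (c, k)) <= N by rewrite size_rcons.
have [g' [l' [e' [ok' cy']]]] := IH (rcons m (c, k)) sz' okm'.
exists (gmul (gpow x n) g'), l'; split => //.
by rewrite key -[gmul (evalw a b m) _]/(gmul (evalw a b m) (gpow (gen a b (c,k).1) (c,k).2)) -evalw_rcons e' conj_assoc.
Qed.
Fixpoint evalp (G : group) (a b : G) (p : seq (nat * nat)) : G :=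
  match p with
  | [::] => gone
  | (i, j) :: p' => gmul (gpow a i) (gmul (gpow b j) (evalp a b p'))
  end.

Fixpoint okp (s t : nat) (p : seq (nat * nat)) : bool :=
  match p with
  | [::] => true
  | (i, j) :: p' => [&& 0 < i, i < s, 0 < j, j < t & okp s t p']
  end.

Lemma to_pairs (s t : nat) (G : group) (a b : G) :
  forall N l, size l <= N -> okw s t l -> (head (false, 0) l).1 = true ->
  (last (true, 0) l).1 = false ->
  exists p, p != [::] /\ okp s t p /\ evalw a b l = evalp a b p.
Proof.
elim=> [|N IH] l; first by case: l.
case: l => [|[c i] l1] //= hsz ok hc; subst c.
case: l1 hsz ok => [|[c' j] l2] //= hsz ok hl.
move: ok => /and4P [i0 ilt ok1 nc']; move: nc'; case: c' ok1 hl => // ok1 hl _.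
move: ok1 => /= /and4P [j0 jlt ok2 hd2].
case: l2 hsz ok2 hd2 hl => [|[c'' k] l3] hsz ok2 hd2 hl.
  by exists [:: (i, j)]; rewrite /= i0 ilt j0 jlt gmulg1.
case: c'' hsz ok2 hd2 hl => hsz ok2 hd2 hl; last by move: hd2.
have [p [pn [okp' ep]]] := IH ((true, k) :: l3) (ltnW hsz) ok2 erefl hl.
exists ((i, j) :: p); split => //.
by rewrite /= i0 ilt j0 jlt okp' -ep.
Qed.

Lemma nf (s t : nat) (hs : 1 < s) (ht : 1 < t) (G : group) (a b : G)
  (hG : is_free_product_cyclic s t G a b) (w : G) :
  exists g u, w = gmul g (gmul u (ginv g)) /\
  (u = gone \/ (exists i, 0 < i < s /\ u = gpow a i) \/
   (exists j, 0 < j < t /\ u = gpow b j) \/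
   exists p, p != [::] /\ okp s t p /\ u = evalp a b p).
Proof.
have [l0 e0] := all_words hs ht hG w.
have [l1 [ok1 e1]] := norm_words hs ht hG l0.
have [g [l [e [ok cy]]]] := cyc_red hs ht hG (leqnn (size l1)) ok1.
rewrite e0 e1 e.
case: l ok cy e => [|[c n] l2] ok cy e.
  by exists g, gone; split => //; left.
case: l2 ok cy e => [|x rest] ok cy e.
  move: ok => /= /andP [n0 /andP [nlt _]].
  exists g, (gmul (gpow (gen a b c) n) gone); split => //; right.
  rewrite gmulg1; clear cy; case: c e nlt => e nlt; [left | right; left]; by exists n; rewrite n0 nlt.
move: cy; rewrite /cycok /= => hcl.
case: c ok hcl e => ok hcl e.
  have [p [pn [okp' ep]]] := to_pairs a b (leqnn _) ok erefl (negbTE hcl).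
  by exists g, (evalw a b ((true, n) :: x :: rest)); split => //; right; right; right; exists p.
(* starting with b: rotate *)
set l' := rcons (x :: rest) (false, n).
have okx : okw s t (x :: rest) := okw_cons ok.
move: (ok) => /= /and4P [n0 nlt _ hx].
have okl' : okw s t l' by rewrite /l' okw_rcons okx /= n0 nlt /=; move: hcl; case: (last _ _).1.
have hd : (head (false, 0) l').1 = true by rewrite /l'; move: hx; case: (x) => [[] nx].
have ld : (last (true, 0) l').1 = false by rewrite /l' last_rcons.
have [p [pn [okp' ep]]] := to_pairs a b (leqnn _) okl' hd ld.
exists (gmul g (gpow b n)), (evalw a b l'); split; last by right; right; right; exists p.
rewrite /l' evalw_rcons /= -conj_assoc; congr (gmul g _).
by rewrite -[gmul (gmul _ (gpow b n)) _]gmulA gmulgV gmulg1.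
Qed.
Import GRing.Theory Num.Theory.
Local Open Scope ring_scope.

Definition aadd (x y : algC) : algC := x + y.
Definition amul (x y : algC) : algC := x * y.
Definition aopp (x : algC) : algC := - x.
Definition asub (x y : algC) : algC := aadd x (aopp y).
Definition a0 : algC := 0.
Definition a1 : algC := 1.
Lemma algC_ring : @ring_theory algC a0 a1 aadd amul asub aopp (@eq algC).
Proof.
constructor=> //; rewrite /aadd/amul/aopp/asub/a0/a1 => *;
 [exact: add0r|exact: addrC|exact: addrA|exact: mul1r|exact: mulrC|exact: mulrA|exact: mulrDl|exact: subrr].
Qed.
Add Ring algCr : algC_ring.
Lemma addE (x y : algC) : x + y = aadd x y. Proof. by []. Qed.
Lemma mulE (x y : algC) : x * y = amul x y. Proof. by []. Qed.
Lemma oppE (x : algC) : - x = aopp x. Proof. by []. Qed.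
Lemma zeroE : 0 = a0 :> algC. Proof. by []. Qed.
Lemma oneE : 1 = a1 :> algC. Proof. by []. Qed.
Definition hornA (p : {poly algC}) (x : algC) : algC := p.[x].
Lemma hornE (p : {poly algC}) x : p.[x] = hornA p x. Proof. by []. Qed.
Definition expA (x : algC) (n : nat) : algC := x ^+ n.
Lemma expE (x : algC) n : x ^+ n = expA x n. Proof. by []. Qed.
Ltac aring := rewrite ?hornE ?expE ?addE ?mulE ?oppE ?zeroE ?oneE;
  match goal with |- ?a = ?b => change (@eq algC a b) end; ring.

Definition mx2 (p q u v : algC) : 'M[algC]_2 :=
  \matrix_(i < 2, j < 2)
    if val i == 0%N then (if val j == 0%N then p else q) else (if val j == 0%N then u else v).

Lemma mx2_00 p q u v : mx2 p q u v 0 0 = p. Proof. by rewrite mxE. Qed.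
Lemma mx2_01 p q u v : mx2 p q u v 0 1 = q. Proof. by rewrite mxE. Qed.
Lemma mx2_10 p q u v : mx2 p q u v 1 0 = u. Proof. by rewrite mxE. Qed.
Lemma mx2_11 p q u v : mx2 p q u v 1 1 = v. Proof. by rewrite mxE. Qed.

Lemma ord2P (i : 'I_2) : i = 0 \/ i = 1.
Proof.
case: i => [[|[|k]] hk]; [left|right|exfalso]; try (apply: val_inj; reflexivity).
by [].
Qed.

Lemma mx2_ext (M N : 'M[algC]_2) :
  M 0 0 = N 0 0 -> M 0 1 = N 0 1 -> M 1 0 = N 1 0 -> M 1 1 = N 1 1 -> M = N.
Proof.
move=> e00 e01 e10 e11; apply/matrixP => i j.
case: (ord2P i) => ->; case: (ord2P j) => ->; assumption.
Qed.

Lemma mx2_mul p q u v p' q' u' v' :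
  mx2 p q u v *m mx2 p' q' u' v' =
  mx2 (p * p' + q * u') (p * q' + q * v') (u * p' + v * u') (u * q' + v * v').
Proof.
by apply: mx2_ext; rewrite !mxE !big_ord_recr big_ord0 /= !mxE add0r.
Qed.

Lemma mx2_scalar k : k%:M = mx2 k 0 0 k.
Proof. by apply: mx2_ext; rewrite !mxE. Qed.

Lemma mx2_one : 1%:M = mx2 1 0 0 1.
Proof. exact: mx2_scalar. Qed.

Lemma mx2_scale k p q u v : k *: mx2 p q u v = mx2 (k * p) (k * q) (k * u) (k * v).
Proof. by apply: mx2_ext; rewrite !mxE. Qed.

Lemma mx2_add p q u v p' q' u' v' :
  mx2 p q u v + mx2 p' q' u' v' = mx2 (p + p') (q + q') (u + u') (v + v').
Proof. by apply: mx2_ext; rewrite !mxE. Qed.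

Lemma mx2_opp p q u v : - mx2 p q u v = mx2 (- p) (- q) (- u) (- v).
Proof. by apply: mx2_ext; rewrite !mxE. Qed.

Lemma mx2_eta (M : 'M[algC]_2) : M = mx2 (M 0 0) (M 0 1) (M 1 0) (M 1 1).
Proof. by apply: mx2_ext; rewrite !mxE. Qed.

Definition tr2 (M : 'M[algC]_2) := M 0 0 + M 1 1.
Definition d2 (M : 'M[algC]_2) := M 0 0 * M 1 1 - M 0 1 * M 1 0.

Lemma d2_mul M N : d2 (M *m N) = d2 M * d2 N.
Proof.
rewrite [M]mx2_eta [N]mx2_eta mx2_mul /d2 !mxE /=. aring.
Qed.

Lemma cayley2 (M : 'M[algC]_2) : M *m M = tr2 M *: M - (d2 M)%:M.
Proof.
rewrite mx2_scalar {1 2}[M]mx2_eta mx2_mul /tr2 /d2.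
apply: mx2_ext; rewrite !mxE /=; aring.
Qed.

Fixpoint mpow (M : 'M[algC]_2) (n : nat) : 'M[algC]_2 :=
  match n with O => 1%:M | S k => M *m mpow M k end.

Lemma key_id (M : 'M[algC]_2) e1 e2 :
  M *m (M - e2%:M) - e1 *: (M - e2%:M) = (tr2 M - e1 - e2) *: M + (e1 * e2 - d2 M)%:M.
Proof.
rewrite /tr2 /d2 [M]mx2_eta !mx2_scalar.
move: (M 0 0) (M 0 1) (M 1 0) (M 1 1) => p q u v.
apply: mx2_ext; rewrite !mxE !big_ord_recr big_ord0 /= !mxE /=; aring.
Qed.

Lemma key_id0 (M : 'M[algC]_2) e1 e2 : e1 + e2 = tr2 M -> e1 * e2 = d2 M ->
  M *m (M - e2%:M) = e1 *: (M - e2%:M).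
Proof.
move=> h1 h2; apply/eqP; rewrite -subr_eq0; apply/eqP.
have e0 : e1 + e2 - e1 - e2 = 0 by aring.
rewrite key_id -h1 -h2 e0 subrr scale0r add0r.
by apply/matrixP => i j; rewrite !mxE mul0rn.
Qed.

Lemma diff_id (M : 'M[algC]_2) e1 e2 : (M - e2%:M) - (M - e1%:M) = (e1 - e2)%:M.
Proof.
rewrite [M]mx2_eta !mx2_scalar.
move: (M 0 0) (M 0 1) (M 1 0) (M 1 1) => p q u v.
apply: mx2_ext; rewrite !mxE /=; aring.
Qed.

Lemma mpow_formula (M : 'M[algC]_2) e1 e2 : e1 + e2 = tr2 M -> e1 * e2 = d2 M ->
  forall n, (e1 - e2) *: mpow M n = e1 ^+ n *: (M - e2%:M) - e2 ^+ n *: (M - e1%:M).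
Proof.
move=> h1 h2; elim=> [|n IH] /=.
  by rewrite !expr0 !scale1r diff_id scalemx1.
rewrite scalemxAr IH mulmxBr -!scalemxAr (key_id0 h1 h2).
have h1' : e2 + e1 = tr2 M by rewrite addrC.
have h2' : e2 * e1 = d2 M by rewrite mulrC.
rewrite (key_id0 h1' h2') !scalerA !exprS [e1 * _]mulrC [e2 * _]mulrC //.
Qed.

Lemma pow_scalar_odd (M : 'M[algC]_2) (z : algC) r :
  d2 M != 0 -> z ^+ r = 1 -> z != 1 -> z + 1 != 0 ->
  z * (tr2 M * tr2 M) = (z + 1) * (z + 1) * d2 M ->
  exists k, mpow M r = k%:M.
Proof.
move=> hD hz z1 z1' htr.
pose e1 := tr2 M / (z + 1).
have he1 : e1 * (z + 1) = tr2 M by rewrite /e1 divfK.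
clearbody e1.
pose e2 := z * e1.
have h1 : e1 + e2 = tr2 M by rewrite /e2 -he1; aring.
have h2 : e1 * e2 = d2 M.
  apply: (mulIf (x := (z + 1) * (z + 1))); first by rewrite mulf_neq0.
  rewrite [d2 M * _]mulrC -htr -he1 /e2; aring.
have hne : e1 - e2 != 0.
  apply/eqP => h; move: hD; rewrite -h2.
  have : e1 * (1 - z) = 0 by rewrite -h /e2; aring.
  move/eqP; rewrite mulf_eq0 subr_eq0 [1 == z]eq_sym (negbTE z1) orbF => /eqP ->.
  by rewrite mul0r eqxx.
exists (e1 ^+ r).
apply: (scalerI hne).
rewrite (mpow_formula h1 h2) /e2 exprMn hz mul1r -scalerBr diff_id !scale_scalar_mx mulrC //.
Qed.

Lemma pow_scalar_even (M : 'M[algC]_2) m :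
  tr2 M = 0 -> mpow M (m.*2) = ((- d2 M) ^+ m)%:M.
Proof.
move=> h0; elim: m => [|m IH] //=.
rewrite ?doubleS /= mulmxA cayley2 h0 scale0r sub0r IH.
rewrite -scalemx1 -scaleNr -scalemxAl mul1mx scale_scalar_mx exprS //.
Qed.

Fixpoint geo (x : algC) (n : nat) : algC :=
  if n is k.+1 then geo x k + x ^+ k else 0.

Lemma geoE x n : geo x n * (x - 1) = x ^+ n - 1.
Proof.
elim: n => [|n IH] /=; first by rewrite mul0r expr0 subrr.
rewrite mulrDl IH exprS; aring.
Qed.

Definition Amx (lam : algC) := mx2 1 1 0 lam.
Definition Bmx (mu z : algC) := mx2 mu 0 z 1.

Lemma mpowA lam n : mpow (Amx lam) n = mx2 1 (geo lam n) 0 (lam ^+ n).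
Proof.
elim: n => [|n IH] /=; first by rewrite mx2_one expr0.
rewrite IH /Amx mx2_mul exprS; congr mx2; aring.
Qed.

Lemma mpowB mu z n : mpow (Bmx mu z) n = mx2 (mu ^+ n) 0 (z * geo mu n) 1.
Proof.
elim: n => [|n IH] /=; first by rewrite mx2_one expr0 mulr0.
rewrite IH /Bmx mx2_mul exprS; congr mx2; aring.
Qed.

Fixpoint rho_p (lam mu z : algC) (p : seq (nat * nat)) : 'M[algC]_2 :=
  match p with
  | [::] => 1%:M
  | (i, j) :: p' => mpow (Amx lam) i *m (mpow (Bmx mu z) j *m rho_p lam mu z p')
  end.

Definition poly4 := ({poly algC} * {poly algC} * {poly algC} * {poly algC})%type.

Definition stepP (lam mu : algC) (i j : nat) (P : poly4) : poly4 :=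
  let: (P00, P01, P10, P11) := P in
  let F00 := (mu ^+ j)%:P + (geo lam i * geo mu j) *: 'X in
  let F01 := (geo lam i)%:P in
  let F10 := (lam ^+ i * geo mu j) *: 'X in
  let F11 := (lam ^+ i)%:P in
  (F00 * P00 + F01 * P10, F00 * P01 + F01 * P11, F10 * P00 + F11 * P10, F10 * P01 + F11 * P11).

Fixpoint P4 (lam mu : algC) (p : seq (nat * nat)) : poly4 :=
  match p with
  | [::] => (1, 0, 0, 1)
  | (i, j) :: p' => stepP lam mu i j (P4 lam mu p')
  end.

Definition ev4 (P : poly4) (z : algC) : 'M[algC]_2 :=
  let: (P00, P01, P10, P11) := P in mx2 P00.[z] P01.[z] P10.[z] P11.[z].

Lemma rho_pE lam mu z p : rho_p lam mu z p = ev4 (P4 lam mu p) z.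
Proof.
elim: p => [|[i j] p IH] /=.
  by rewrite mx2_one /= hornerC horner0.
rewrite IH mpowA mpowB.
case: (P4 lam mu p) => [[[P00 P01] P10] P11] /=.
rewrite !mx2_mul !hornerE; congr mx2; aring.
Qed.

Definition inv4 (k : nat) (P : poly4) : bool :=
  let: (P00, P01, P10, P11) := P in
  [&& size P00 == k.+1, (size P01 <= k)%N, (size P10 <= k.+1)%N & (size P11 <= k)%N].

Lemma sz_mul_le (p q : {poly algC}) m n : (size p <= m)%N -> (size q <= n)%N -> (size (p * q)%R <= (m + n).-1)%N.
Proof.
move=> hp hq; apply: leq_trans (size_polyMleq p q) _.
by rewrite -!subn1 leq_sub2r // leq_add.
Qed.

Lemma sz_add_le (p q : {poly algC}) k : (size p <= k)%N -> (size q <= k)%N -> (size (p + q)%R <= k)%N.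
Proof. by move=> hp hq; apply: leq_trans (size_polyD p q) _; rewrite geq_max hp hq. Qed.

Lemma sizeF00 (c d e : algC) : c * d != 0 -> size (e%:P + (c * d) *: 'X) = 2.
Proof.
move=> h; rewrite addrC size_polyDl size_scale // size_polyX //.
by apply: leq_ltn_trans (size_polyC_leq1 e) _.
Qed.

Lemma sizeF10 (c : algC) : (size (c *: 'X) <= 2)%N.
Proof. by apply: leq_trans (size_scale_leq _ _) _; rewrite size_polyX. Qed.

Lemma inv_step lam mu i j k P :
  geo lam i != 0 -> geo mu j != 0 -> (0 < k)%N -> inv4 k P -> inv4 k.+1 (stepP lam mu i j P).
Proof.
move=> hc hd k0.
case: P => [[[P00 P01] P10] P11] /= /and4P [/eqP h00 h01 h10 h11].
have hcd : geo lam i * geo mu j != 0 by rewrite mulf_neq0.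
have hF00 := sizeF00 (mu ^+ j) hcd.
have hF01 := size_polyC_leq1 (geo lam i).
have hF10 := sizeF10 (lam ^+ i * geo mu j).
have hF11 := size_polyC_leq1 (lam ^+ i).
have nzF : (mu ^+ j)%:P + (geo lam i * geo mu j) *: 'X != 0.
  by rewrite -size_poly_eq0 hF00.
have nzP : P00 != 0 by rewrite -size_poly_eq0 h00.
apply/and4P; split.
- rewrite size_polyDl.
    by rewrite size_mul // hF00 h00 add2n.
  rewrite [size (_ * P00)]size_mul // hF00 h00 add2n /=.
  by apply: leq_ltn_trans (sz_mul_le hF01 h10) _; rewrite add1n.
- apply: sz_add_le.
    by apply: leq_trans (sz_mul_le (eq_leq hF00) h01) _; rewrite add2n.
  by apply: leq_trans (sz_mul_le hF01 h11) _; rewrite add1n /= leqnSn.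
- apply: sz_add_le.
    by apply: leq_trans (sz_mul_le hF10 (eq_leq h00)) _; rewrite add2n.
  by apply: leq_trans (sz_mul_le hF11 h10) _; rewrite add1n /= leqnSn.
- apply: sz_add_le.
    by apply: leq_trans (sz_mul_le hF10 h01) _; rewrite add2n.
  by apply: leq_trans (sz_mul_le hF11 h11) _; rewrite add1n /= leqnSn.
Qed.

Lemma inv_base lam mu i j :
  geo lam i != 0 -> geo mu j != 0 -> inv4 1 (stepP lam mu i j (1, 0, 0, 1)).
Proof.
move=> hc hd /=.
have hcd : geo lam i * geo mu j != 0 by rewrite mulf_neq0.
rewrite !mulr0 !mulr1 !addr0 !add0r sizeF00 // eqxx /=.
by rewrite !size_polyC_leq1 sizeF10.
Qed.

Lemma inv_P4 lam mu (p : seq (nat * nat)) :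
  (forall i j, (i, j) \in p -> geo lam i != 0 /\ geo mu j != 0) ->
  p != [::] -> inv4 (size p) (P4 lam mu p).
Proof.
elim: p => [|[i j] p IH] // hp _.
have [hc hd] := hp i j (mem_head _ _).
case: p IH hp => [|x p] IH hp; first exact: inv_base.
apply: inv_step => //.
apply: IH => // i' j' hin; apply: hp; by rewrite in_cons hin orbT.
Qed.

Fixpoint dP (lam mu : algC) (p : seq (nat * nat)) : algC :=
  if p is (i, j) :: p' then lam ^+ i * mu ^+ j * dP lam mu p' else 1.

Lemma d2_rho lam mu z p : d2 (rho_p lam mu z p) = dP lam mu p.
Proof.
elim: p => [|[i j] p IH] /=.
  by rewrite mx2_one /d2 !mxE /=; aring.
rewrite !d2_mul IH mpowA mpowB /d2 !mxE /=; aring.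
Qed.

Definition tr4 (P : poly4) : {poly algC} := let: (P00, _, _, P11) := P in P00 + P11.

Lemma tr4_ev P z : tr2 (ev4 P z) = (tr4 P).[z].
Proof. by case: P => [[[P00 P01] P10] P11]; rewrite /tr2 /= !mxE /= hornerD. Qed.

Lemma size_tr4 k P : (0 < k)%N -> inv4 k P -> size (tr4 P) = k.+1.
Proof.
move=> k0; case: P => [[[P00 P01] P10] P11] /= /and4P [/eqP h00 _ _ h11].
by rewrite size_polyDl h00 // ltnS.
Qed.

Lemma root_even (T : {poly algC}) : (1 < size T)%N -> exists z, T.[z] = 0.
Proof.
move=> hT; have : size T != 1%N by rewrite neq_ltn hT orbT.
by move/closed_rootP => [z /rootP hz]; exists z.
Qed.

Lemma root_odd (T : {poly algC}) (c D : algC) : (1 < size T)%N -> c != 0 ->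
  exists z, c * (T.[z] * T.[z]) = D.
Proof.
move=> hT hc.
have nzT : T != 0 by rewrite -size_poly_eq0 -lt0n; apply: ltnW.
have hs : size (c *: (T * T)) = ((size T + size T).-1)%N by rewrite size_scale // size_mul.
have h1 : (1 < size (c *: (T * T)))%N.
  rewrite hs; apply: leq_trans hT _; case: (size T) => // n; by rewrite addSn /= leq_addl.
have h2 : size (c *: (T * T) - D%:P) = size (c *: (T * T)).
  rewrite size_polyDl //; rewrite size_polyN.
  by apply: leq_ltn_trans (size_polyC_leq1 _) h1.
have h3 : (1 < size (c *: (T * T) - D%:P)%R)%N by rewrite h2.
have [z hz] := root_even h3.
by exists z; move: hz; rewrite !hornerE => /eqP; rewrite subr_eq0 => /eqP.
Qed.

Lemma unit_mul_pf (X Y : {M : 'M[algC]_2 | M \in unitmx}) : sval X *m sval Y \in unitmx.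
Proof. by rewrite unitmx_mul (svalP X) (svalP Y). Qed.
Lemma unit_inv_pf (X : {M : 'M[algC]_2 | M \in unitmx}) : invmx (sval X) \in unitmx.
Proof. by rewrite unitmx_inv (svalP X). Qed.

Lemma sig_eqP (X Y : {M : 'M[algC]_2 | M \in unitmx}) : sval X = sval Y -> X = Y.
Proof. apply: eq_sig_hprop => ? ? ?; exact: eq_irrelevance. Qed.

Definition GL2 : group.
refine (@Group {M : 'M[algC]_2 | M \in unitmx}
  (fun X Y => exist _ (sval X *m sval Y) (unit_mul_pf X Y)) (exist (fun M : 'M[algC]_2 => M \in unitmx) (1%:M : 'M[algC]_2) (@unitmx1 _ _))
  (fun X => exist _ (invmx (sval X)) (unit_inv_pf X)) _ _ _).
- by move=> x y z; apply: sig_eqP; rewrite /= mulmxA.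
- by move=> x; apply: sig_eqP; rewrite /= mul1mx.
- by move=> x; apply: sig_eqP; rewrite /= mulVmx // (svalP x).
Defined.

Lemma GL2_pow (X : GL2) n : sval (gpow X n) = mpow (sval X) n.
Proof. by elim: n => //= n ->. Qed.

Lemma mpow1 n : mpow 1%:M n = 1%:M.
Proof. by elim: n => //= n ->; rewrite mul1mx. Qed.

Lemma mk_unit (M : 'M[algC]_2) s : (0 < s)%N -> mpow M s = 1%:M -> M \in unitmx.
Proof. by case: s => // s _ /= /mulmx1_unit []. Qed.

Definition Ksc (X : GL2) : Prop := exists k, sval X = k%:M.

Lemma Ksc_normal : is_normal_subgroup GL2 Ksc.
Proof.
split; first by exists 1.
split; first by move=> x y [k hk] [l hl]; exists (k * l); rewrite /= hk hl scalar_mxM.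
split; first by move=> x [k hk]; exists k^-1; rewrite /= hk invmx_scalar.
move=> g x [k hk]; exists k; rewrite /= hk -scalar_mxC mulmxA mulVmx ?mul1mx //.
exact: (svalP g).
Qed.

Lemma K_conj (H : group) (K : H -> Prop) (hK : is_normal_subgroup H K) (g x : H) :
  K x -> K (gmul g (gmul x (ginv g))).
Proof.
case: hK => [_ [_ [_ hc]]] hx.
by have := hc (ginv g) x hx; rewrite ginvK.
Qed.

Lemma closure_lemma (G H : group) (f : G -> H) (hf : is_hom G H f)
  (K : H -> Prop) (hK : is_normal_subgroup H K) (w z : G) :
  K (f w) -> ~ K (f z) -> ~ normal_closure G w z.
Proof.
move=> hw hz hc; apply: hz; apply: (hc (fun x => K (f x))) => //.
case: hK => [h1 [hm [hi hc']]].
split; first by rewrite (hom1 hf).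
split; first by move=> x y hx hy; rewrite hf; apply: hm.
split; first by move=> x hx; rewrite (homV hf); apply: hi.
by move=> g x hx; rewrite !hf (homV hf); apply: hc'.
Qed.

Lemma rep_exists (s t : nat) (G : group) (a b : G) (hG : is_free_product_cyclic s t G a b)
  (X Y : 'M[algC]_2) : (0 < s)%N -> (0 < t)%N -> mpow X s = 1%:M -> mpow Y t = 1%:M ->
  exists f : G -> GL2, is_hom G GL2 f /\ sval (f a) = X /\ sval (f b) = Y.
Proof.
move=> s0 t0 hX hY.
pose x : GL2 := exist _ X (mk_unit s0 hX).
pose y : GL2 := exist _ Y (mk_unit t0 hY).
have hx : gpow x s = gone by apply: sig_eqP; rewrite GL2_pow.
have hy : gpow y t = gone by apply: sig_eqP; rewrite GL2_pow.
case: hG => [_ [_ U]].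
have [[f [hf [fa fb]]] _] := U GL2 x y hx hy.
by exists f; rewrite fa fb.
Qed.

Lemma rho_eval (G : group) (a b : G) (f : G -> GL2) (hf : is_hom G GL2 f) lam mu z :
  sval (f a) = Amx lam -> sval (f b) = Bmx mu z ->
  forall p, sval (f (evalp a b p)) = rho_p lam mu z p.
Proof.
move=> fa fb; elim=> [|[i j] p IH] /=; first by rewrite (hom1 hf).
by rewrite !hf !(homX hf) /= !GL2_pow fa fb IH.
Qed.

Lemma prim_facts (s : nat) (lam : algC) : (1 < s)%N -> s.-primitive_root lam ->
  [/\ lam ^+ s = 1, lam != 0, geo lam s = 0 &
      forall i, (0 < i < s)%N -> geo lam i != 0].
Proof.
move=> hs pl.
have hl : lam ^+ s = 1 := prim_expr_order pl.
have ne1 : forall i, (0 < i < s)%N -> lam ^+ i != 1.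
  move=> i /andP [i0 ilt]; rewrite -(prim_order_dvd pl).
  by apply/negP => /(dvdn_leq i0); rewrite leqNgt ilt.
have l1 : lam - 1 != 0 by rewrite subr_eq0 -[lam]expr1 ne1 // hs.
split => //.
- apply/negP => /eqP l0; move: hl; rewrite l0 expr0n.
  by rewrite gtn_eqF ?(ltnW hs) //= => /eqP; rewrite eq_sym oner_eq0.
- by apply: (mulIf l1); rewrite geoE hl subrr mul0r.
- move=> i hi; apply/eqP => g0.
  by move: (geoE lam i); rewrite g0 mul0r => /esym/eqP; rewrite subr_eq0 (negbTE (ne1 i hi)).
Qed.

Lemma Amx_nonscalar lam : ~ (exists k, Amx lam = k%:M).
Proof.
move=> [k hk]; have := f_equal (fun M : 'M[algC]_2 => M 0 1) hk.
by rewrite /Amx mx2_scalar !mx2_01 => /eqP; rewrite oner_eq0.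
Qed.

Lemma Bmx0_nonscalar mu : mu != 1 -> ~ (exists k, Bmx mu 0 = k%:M).
Proof.
move=> h [k hk].
have e0 := f_equal (fun M : 'M[algC]_2 => M 0 0) hk.
have e1 := f_equal (fun M : 'M[algC]_2 => M 1 1) hk.
move: e0 e1; rewrite /Bmx mx2_scalar !mx2_00 !mx2_11 => e0 e1.
by rewrite e0 e1 eqxx in h.
Qed.

Lemma okp_mem s t (p : seq (nat * nat)) i j : okp s t p -> (i, j) \in p ->
  (0 < i < s)%N && (0 < j < t)%N.
Proof.
elim: p => [|[i' j'] p IH] //= /and5P [i0 il j0 jl okp'].
rewrite in_cons => /orP [/eqP [-> ->]|hin]; first by rewrite i0 il j0 jl.
exact: IH.
Qed.

Lemma dP_neq0 lam mu p : lam != 0 -> mu != 0 -> dP lam mu p != 0.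
Proof.
move=> hl hm; elim: p => [|[i j] p IH] /=; first exact: oner_neq0.
by rewrite !mulf_neq0 // expf_neq0.
Qed.

Lemma not_one_prim (r : nat) (z : algC) : (1 < r)%N -> r.-primitive_root z -> z != 1.
Proof.
move=> hr pz; rewrite -[z]expr1 -(prim_order_dvd pz) dvdn1 gtn_eqF //.
Qed.

Theorem mainTheorem18 (s t r : nat) (hs : (1 < s)%coq_nat) (ht : (1 < t)%coq_nat)
  (hr : (1 < r)%coq_nat)
  (G : group) (a b : G) (hG : is_free_product_cyclic s t G a b) (w : G) :
  exists z : G, ~ normal_closure G (gpow w r) z.
Proof.
move/ltP: hs => hs; move/ltP: ht => ht; move/ltP: hr => hr.
have s0 : (0 < s)%N := ltnW hs.
have t0 : (0 < t)%N := ltnW ht.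
have [lam plam] := C_prim_root_exists s0.
have [mu pmu] := C_prim_root_exists t0.
have [hl l0 gls hgl] := prim_facts hs plam.
have [hm m0 gmt hgm] := prim_facts ht pmu.
have hA : mpow (Amx lam) s = 1%:M by rewrite mpowA gls hl mx2_one.
have hB : forall z, mpow (Bmx mu z) t = 1%:M by move=> z; rewrite mpowB gmt hm mulr0 mx2_one.
have mu1 := not_one_prim ht pmu.
have [g [u [ew hu]]] := nf hs ht hG w.
have red : forall f K, is_hom G GL2 f -> is_normal_subgroup GL2 K ->
    K (f (gpow u r)) -> K (f (gpow w r)).
  by move=> f K hf hK h; rewrite ew gpow_conj !hf (homV hf); apply: K_conj.
case: hu => [hu|[[i [hi hu]]|[[j [hj hu]]|[p [pn [okp' hu]]]]]].
- have [f [hf [fa fb]]] := rep_exists hG s0 t0 hA (mpow1 t).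
  exists a; apply: (closure_lemma hf Ksc_normal).
    by apply: (red _ _ hf Ksc_normal); rewrite /Ksc; exists 1; rewrite hu gpow1 (hom1 hf).
  by rewrite /Ksc fa; exact: Amx_nonscalar.
- have [f [hf [fa fb]]] := rep_exists hG s0 t0 (mpow1 s) (hB 0).
  exists b; apply: (closure_lemma hf Ksc_normal).
    by apply: (red _ _ hf Ksc_normal); rewrite /Ksc; exists 1; rewrite hu !(homX hf) !GL2_pow fa !mpow1.
  by rewrite /Ksc fb; exact: Bmx0_nonscalar.
- have [f [hf [fa fb]]] := rep_exists hG s0 t0 hA (mpow1 t).
  exists a; apply: (closure_lemma hf Ksc_normal).
    by apply: (red _ _ hf Ksc_normal); rewrite /Ksc; exists 1; rewrite hu !(homX hf) !GL2_pow fb !mpow1.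
  by rewrite /Ksc fa; exact: Amx_nonscalar.
have hp : forall i j, (i, j) \in p -> geo lam i != 0 /\ geo mu j != 0.
  by move=> i j /(okp_mem okp') /andP [hi hj]; split; [apply: hgl | apply: hgm].
have hinv := inv_P4 hp pn.
have sp : (0 < size p)%N by rewrite lt0n size_eq0.
have sT := size_tr4 sp hinv.
have sT1 : (1 < size (tr4 (P4 lam mu p)))%N by rewrite sT ltnS.
have dne := dP_neq0 p l0 m0.
have key : forall z (f : G -> GL2), is_hom G GL2 f ->
    sval (f a) = Amx lam -> sval (f b) = Bmx mu z ->
    [/\ sval (f (gpow u r)) = mpow (rho_p lam mu z p) r,
        tr2 (rho_p lam mu z p) = (tr4 (P4 lam mu p)).[z] &
        d2 (rho_p lam mu z p) = dP lam mu p].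
  move=> z f hf fa fb; split.
  - by rewrite (homX hf) GL2_pow hu (rho_eval hf fa fb).
  - by rewrite rho_pE tr4_ev.
  - exact: d2_rho.
case: (boolP (odd r)) => hodd.
  have [zeta pz] := C_prim_root_exists (ltnW hr).
  have [hz z0 _ _] := prim_facts hr pz.
  have z1 := not_one_prim hr pz.
  have z1' : zeta + 1 != 0.
    apply/negP; rewrite addr_eq0 => /eqP ez.
    move: hz; rewrite ez -signr_odd hodd expr1 => h.
    have : (2%:R : algC) == 0 by rewrite mulr2n -{1}h addNr.
    by rewrite pnatr_eq0.
  have [z hz'] := root_odd ((zeta + 1) * (zeta + 1) * dP lam mu p) sT1 z0.
  have [f [hf [fa fb]]] := rep_exists hG s0 t0 hA (hB z).
  have [e1 e2 e3] := key z f hf fa fb.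
  exists a; apply: (closure_lemma hf Ksc_normal).
    apply: (red _ _ hf Ksc_normal); rewrite /Ksc e1.
    apply: (pow_scalar_odd (z := zeta)) => //; first by rewrite e3.
    by rewrite e2 e3.
  by rewrite /Ksc fa; exact: Amx_nonscalar.
have [z hz'] := root_even sT1.
have [f [hf [fa fb]]] := rep_exists hG s0 t0 hA (hB z).
have [e1 e2 e3] := key z f hf fa fb.
exists a; apply: (closure_lemma hf Ksc_normal).
  apply: (red _ _ hf Ksc_normal); rewrite /Ksc e1 -(even_halfK hodd) pow_scalar_even.
    by eexists.
  by rewrite e2.
by rewrite /Ksc fa; exact: Amx_nonscalar.
Qed.
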